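(* Fix $n$ and $l\ge1$, let $q=p_{l+1}$, and let $T^*\subseteq T$. Suppose $A^*\subseteq(2n/q,2n]$ is of the form $A^*=\bigcup_{t\in T^*}A_t$, where each $A_t$ is a maximum-size antichain of the poset $L(t)$ (under divisibility). Then $A^*$ can be extended to a primitive set $A$ with $|A|=n$ and $A^*\subseteq A\subseteq (2n/q,2n]\cap\mathbb Z$. Furthermore, the extension can be chosen so that distinct such $A^*$ give distinct $A$ (namely $A\cap\bigcup_{t\in T^*}L(t)=A^*$).
   Context: A set of positive integers is primitive if no element divides another. Let $p_1<p_2<\dots$ be the primes. $M_l$ is the set of positive integers all of whose prime factors lie in $\{p_1,\dots,p_l\}$, and $M_l(x)=\{m\in M_l:m\le x\}$. Let $T=\{t\in\{1,\dots,2n\}:\gcd(t,p_1p_2\cdots p_l)=1\}$, and for $t\in T$ let $L(t)=t\cdot M_l(2n/t)=\{tm: m\in M_l,\ tm\le 2n\}$, ordered by divisibility. *)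

(* Defs.v *)
From mathcomp Require Import all_boot.
Set Implicit Arguments. Unset Strict Implicit. Unset Printing Implicit Defensive.

Definition primepi (x : nat) : nat := count prime (iota 0 x.+1).

(* p is the k-th prime p_k (1-indexed) *)
Definition is_kth_prime (k p : nat) : bool := prime p && (primepi p == k).

(* With q = p_(l+1), the primes p_1,...,p_l are exactly the primes < q. *)
(* m \in M_l : positive integer all of whose prime factors are < q *)
Definition inM (q m : nat) : bool := (0 < m) && all (fun p => p < q) (primes m).

Definition primorial (q : nat) : nat := \prod_(p < q | prime p) p.

Definition Tset (n q : nat) : {set 'I_(2 * n).+1} :=
  [set t : 'I_(2 * n).+1 | (0 < val t) && (gcdn (val t) (primorial q) == 1)].

Definition Lset (n q t : nat) : {set 'I_(2 * n).+1} :=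
  [set x : 'I_(2 * n).+1 | [exists m : 'I_(2 * n).+1, inM q m && (val x == t * m)]].

Definition antichain (N : nat) (A : {set 'I_N}) : Prop :=
  forall x y : 'I_N, x \in A -> y \in A -> val x %| val y -> x = y.

Definition primitive (N : nat) (A : {set 'I_N}) : Prop :=
  (forall x : 'I_N, x \in A -> 0 < val x) /\ antichain A.

Definition max_antichain (N : nat) (P A : {set 'I_N}) : Prop :=
  A \subset P /\ antichain A /\
  (forall B : {set 'I_N}, B \subset P -> antichain B -> #|B| <= #|A|).

(* Main.v *)
Require Import Defs.
From mathcomp Require Import all_boot.
From mathcomp Require Import zify.
Set Implicit Arguments. Unset Strict Implicit. Unset Printing Implicit Defensive.

Lemma inMP q m : reflect (0 < m /\ forall p, prime p -> p %| m -> p < q) (inM q m).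
Proof.
apply: (iffP andP) => [[m0 /allP H]|[m0 H]]; split => //.
- move=> p pp pm; apply: H; by rewrite mem_primes pp m0.
- apply/allP => p; rewrite mem_primes => /and3P[pp _ pm]; exact: H.
Qed.

Lemma q_gt2 l q : 1 <= l -> is_kth_prime l.+1 q -> 2 < q.
Proof.
move=> hl /andP[pq /eqP hpi].
have q2 := prime_gt1 pq.
have p2 : primepi 2 = 1 by [].
case: (ltngtP q 2) => // h.
- lia.
- subst q; rewrite p2 in hpi; lia.
Qed.

Lemma primorial_dvd q p : prime p -> p < q -> p %| primorial q.
Proof.
move=> pp pq; rewrite /primorial (bigD1 (Ordinal pq)) //=.
apply: dvdn_mulr; exact: dvdnn.
Qed.

Lemma coprime_TM q t k : gcdn t (primorial q) = 1 -> inM q k -> coprime t k.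
Proof.
move=> ht /inMP[k0 hk].
apply: contraT => ncop.
have g1 : 1 < gcdn t k.
  have := gcdn_gt0 t k; rewrite k0 orbT. move: ncop; rewrite /coprime. lia.
have pp := pdiv_prime g1.
have pg := pdiv_dvd (gcdn t k).
have pt : pdiv (gcdn t k) %| t := dvdn_trans pg (dvdn_gcdl _ _).
have pk : pdiv (gcdn t k) %| k := dvdn_trans pg (dvdn_gcdr _ _).
have : pdiv (gcdn t k) %| gcdn t (primorial q).
  by rewrite dvdn_gcd pt primorial_dvd // hk.
rewrite ht dvdn1 => /eqP h1; by rewrite h1 in pp.
Qed.

Lemma inM_mul q a b : inM q a -> inM q b -> inM q (a * b).
Proof.
move=> /inMP[a0 ha] /inMP[b0 hb]; apply/inMP; split; first by rewrite muln_gt0 a0.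
move=> p pp; rewrite Euclid_dvdM // => /orP[]; [exact: ha|exact: hb].
Qed.

Lemma LsetP n q t (x : 'I_(2*n).+1) : 0 < t ->
  reflect (exists m, inM q m /\ val x = t * m) (x \in Lset n q t).
Proof.
move=> t0; rewrite /Lset inE; apply: (iffP existsP) => [[m /andP[hm /eqP e]]|[m [hm e]]].
- by exists m.
- have mle : m < (2*n).+1.
    have := ltn_ord x; rewrite e; nia.
  by exists (Ordinal mle); rewrite /= hm e eqxx.
Qed.

Lemma LsetM n q t (x y : 'I_(2*n).+1) k : 0 < t -> x \in Lset n q t -> inM q k ->
  val y = k * val x -> y \in Lset n q t.
Proof.
move=> t0 /(LsetP _ _ t0) [m [hm e]] hk ey; apply/(LsetP _ _ t0).
exists (m * k); split; first exact: inM_mul.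
rewrite ey e; nia.
Qed.

Lemma LsetD n q t (x y : 'I_(2*n).+1) k : 0 < t -> gcdn t (primorial q) = 1 ->
  y \in Lset n q t -> inM q k -> val y = k * val x -> x \in Lset n q t.
Proof.
move=> t0 ht /(LsetP _ _ t0) [m [hm e]] hk ey.
have cop := coprime_TM ht hk.
have k0 : 0 < k by case/inMP: hk.
have kd : k %| m.
  rewrite coprime_sym in cop.
  by rewrite -(Gauss_dvdr _ cop) -e ey dvdn_mulr.
move: kd => /dvdnP[j ej].
apply/(LsetP _ _ t0); exists j; split.
- case/inMP: hm => m0 hm'; apply/inMP; split.
    move: m0; rewrite ej muln_gt0 => /andP[] //.
  move=> p pp pj; apply: hm' => //; rewrite ej; exact: dvdn_mulr.
- apply/eqP; rewrite -(eqn_pmul2l k0) -ey e ej; apply/eqP; nia.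
Qed.

Lemma L_unique n q t t' (y : 'I_(2*n).+1) : 0 < t -> 0 < t' ->
  gcdn t (primorial q) = 1 -> gcdn t' (primorial q) = 1 ->
  y \in Lset n q t -> y \in Lset n q t' -> t = t'.
Proof.
move=> t0 t0' ht ht' /(LsetP _ _ t0) [m [hm e]] /(LsetP _ _ t0') [m' [hm' e']].
apply/eqP; rewrite eqn_dvd; apply/andP; split.
- rewrite -(Gauss_dvdl _ (coprime_TM ht hm')) -e' e; exact: dvdn_mulr.
- rewrite -(Gauss_dvdl _ (coprime_TM ht' hm)) -e e'; exact: dvdn_mulr.
Qed.
Lemma cardU n : #|[set x : 'I_(2*n).+1 | n < val x]| = n.
Proof.
rewrite -sum1_card.
rewrite (eq_bigl (fun i : 'I_(2*n).+1 => n < i)); last by move=> i; rewrite inE.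
rewrite -(big_mkord (fun i => n < i) (fun _ => 1)).
rewrite (big_cat_nat (n := n.+1)) //=; last lia.
rewrite big_nat_cond big1; last by move=> i /andP[/andP[_ h1] h2]; lia.
rewrite big_nat_cond (eq_bigl (fun i => (n.+1 <= i < (2*n).+1) && true)); last first.
  move=> i; rewrite andbT; case: (n.+1 <= i < (2*n).+1) /andP => //= -[h1 h2]; lia.
rewrite -big_nat_cond sum_nat_const_nat; lia.
Qed.

Definition phiv (N x : nat) := 2 ^ trunc_log 2 (N %/ x) * x.

Lemma phiv_le N x : x < N.+1 -> phiv N x < N.+1.
Proof.
rewrite !ltnS /phiv; case: (posnP x) => [->|x0 xN]; first by rewrite muln0.
have d0 : 0 < N %/ x by rewrite divn_gt0.
have := trunc_logP (isT : 1 < 2) d0.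
have := leq_divM N x. nia.
Qed.

Lemma phiv_gt n x : 0 < x -> x <= 2 * n -> n < phiv (2 * n) x.
Proof.
move=> x0 xN; rewrite /phiv.
have := trunc_log_ltn (2 * n %/ x) (isT : 1 < 2); rewrite expnS.
have := ltn_ceil (2 * n) x0. nia.
Qed.

Lemma phiv_id n x : n < x -> x <= 2 * n -> phiv (2 * n) x = x.
Proof.
move=> h1 h2; rewrite /phiv.
have : 2 * n %/ x <= 1 by rewrite -ltnS ltn_divLR; lia.
move=> h; have : trunc_log 2 (2 * n %/ x) == 0.
  rewrite trunc_log_eq0; apply/orP; right; exact: h.
by move/eqP ->; rewrite expn0 mul1n.
Qed.

Lemma pow2_div a b x y : 2^a * x = 2^b * y -> a <= b -> y %| x.
Proof.
move=> e ab; rewrite -(subnKC ab) expnD -mulnA in e.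
move/eqP: e; rewrite eqn_pmul2l ?expn_gt0 // => /eqP ->.
apply: dvdn_mull; exact: dvdnn.
Qed.

Definition phi n (x : 'I_(2*n).+1) : 'I_(2*n).+1 := Ordinal (phiv_le (ltn_ord x)).

Lemma phi_L n q t (x : 'I_(2*n).+1) : 0 < t -> 2 < q ->
  x \in Lset n q t -> phi x \in Lset n q t.
Proof.
move=> t0 q2 xL; apply: (LsetM t0 xL (k := 2 ^ trunc_log 2 (2 * n %/ x))) => //.
apply/inMP; split; first by rewrite expn_gt0.
move=> p pp; rewrite Euclid_dvdX // => /andP[p2 _].
have := dvdn_leq (isT : 0 < 2) p2; lia.
Qed.

Theorem claim1 (n l q : nat) (hl : 1 <= l) (hq : is_kth_prime l.+1 q)
  (Tstar : {set 'I_(2 * n).+1}) (hT : Tstar \subset Tset n q)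
  (At : 'I_(2 * n).+1 -> {set 'I_(2 * n).+1})
  (hAt : forall t, t \in Tstar -> max_antichain (Lset n q (val t)) (At t))
  (hrange : forall x : 'I_(2 * n).+1,
      x \in \bigcup_(t in Tstar) At t -> 2 * n < q * val x) :
  exists A : {set 'I_(2 * n).+1},
    [/\ primitive A, #|A| = n,
        \bigcup_(t in Tstar) At t \subset A,
        (forall x : 'I_(2 * n).+1, x \in A -> 2 * n < q * val x) &
        A :&: \bigcup_(t in Tstar) Lset n q (val t) = \bigcup_(t in Tstar) At t].
Proof.
have q2 := q_gt2 hl hq.
pose U := [set x : 'I_(2*n).+1 | n < val x].
pose LL := \bigcup_(t in Tstar) Lset n q (val t).
pose Astar := \bigcup_(t in Tstar) At t.
pose A := Astar :|: (U :\: LL).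
have Tprop : forall t, t \in Tstar -> 0 < val t /\ gcdn (val t) (primorial q) = 1.
  move=> t /(subsetP hT); rewrite inE => /andP[-> /eqP ->]; by [].
have AtL : forall t, t \in Tstar -> At t \subset Lset n q (val t).
  by move=> t /hAt [].
have Atanti : forall t, t \in Tstar -> antichain (At t).
  by move=> t /hAt [_ []].
have Arange : forall x, x \in A -> 2 * n < q * val x.
  move=> x; rewrite in_setU in_setD => /orP[hx|/andP[_ hx]]; first exact: hrange.
  move: hx; rewrite /U inE => hx. have hx2 : n < nat_of_ord x := hx. suff : 2 * n < q * nat_of_ord x by []. have : 3 * x <= q * x by apply: leq_mul. lia.
have Apos : forall x, x \in A -> 0 < val x.
  move=> x /Arange; case: (posnP (val x)) => [->|//]; by rewrite muln0.
have Uanti : forall x y : 'I_(2*n).+1, n < nat_of_ord x -> n < nat_of_ord y ->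
    nat_of_ord x %| nat_of_ord y -> nat_of_ord x = nat_of_ord y.
  move=> x y hx hy /dvdnP[k ek]; have := ltn_ord y.
  case: k ek => [|[|k]] ek; nia.
have smallk : forall (x y : 'I_(2*n).+1) k, 2*n < q * nat_of_ord x -> nat_of_ord y = k * nat_of_ord x ->
    0 < nat_of_ord y -> inM q k.
  move=> x y k hx ey y0.
  have k0 : 0 < k by move: y0; rewrite ey muln_gt0 => /andP[].
  apply/inMP; split => // p pp pk; rewrite ltnNge; apply/negP => qp.
  have := ltn_ord y; rewrite ey; have := dvdn_leq k0 pk; nia.
have Aanti : antichain A.
  move=> x y hxA hyA dxy; apply: val_inj.
  have y0 := Apos y hyA.
  case/dvdnP: (dxy) => k ek.
  have hk := smallk x y k (Arange x hxA) ek y0.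
  move: hxA hyA; rewrite !in_setU !in_setD => /orP[xs|/andP[xnL xU]] /orP[ys|/andP[ynL yU]].
  - case/bigcupP: xs => t tT xt; case/bigcupP: ys => t' tT' yt'.
    have [t0 ht] := Tprop t tT; have [t0' ht'] := Tprop t' tT'.
    have xL := subsetP (AtL t tT) x xt.
    have yL := LsetM t0 xL hk ek.
    have yL' := subsetP (AtL t' tT') y yt'.
    have tt' := L_unique t0 t0' ht ht' yL yL'.
    have e : t = t' := val_inj tt'.
    subst t'.
    by rewrite (Atanti t tT x y xt yt' dxy).
  - case/bigcupP: xs => t tT xt. have [t0 ht] := Tprop t tT.
    have yL := LsetM t0 (subsetP (AtL t tT) x xt) hk ek.
    exfalso; move/negP: ynL; apply; apply/bigcupP; by exists t.
  - case/bigcupP: ys => t tT yt. have [t0 ht] := Tprop t tT.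
    have xL := LsetD t0 ht (subsetP (AtL t tT) y yt) hk ek.
    exfalso; move/negP: xnL; apply; apply/bigcupP; by exists t.
  - move: xU yU; rewrite /U !inE => xU yU; exact: Uanti.
have phi_inj : forall B : {set 'I_(2*n).+1}, antichain B -> {in B &, injective (@phi n)}.
  move=> B hB x y xB yB /(congr1 val) /= e.
  rewrite /phiv in e.
  case: (leqP (trunc_log 2 (2*n %/ x)) (trunc_log 2 (2*n %/ y))) => h.
  - apply/esym/hB => //; exact: pow2_div e h.
  - apply: hB => //; exact: pow2_div (esym e) (ltnW h).
have phiU : forall x : 'I_(2*n).+1, 0 < val x -> phi x \in U.
  move=> x x0; rewrite /U inE /=; apply: phiv_gt => //; rewrite -ltnS; exact: ltn_ord.
have imAt : forall t, t \in Tstar -> (@phi n) @: At t = U :&: Lset n q (val t).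
  move=> t tT; have [t0 ht] := Tprop t tT.
  apply/eqP; rewrite eqEcard; apply/andP; split.
  - apply/subsetP => u /imsetP[x xt ->]; rewrite in_setI; apply/andP; split.
      apply: phiU; apply: Apos; rewrite in_setU; apply/orP; left.
      apply/bigcupP; by exists t.
    exact: phi_L t0 q2 (subsetP (AtL t tT) x xt).
  - rewrite card_in_imset; last exact: phi_inj (Atanti t tT).
    case: (hAt t tT) => _ [_ hmax]; apply: hmax; first exact: subsetIr.
    move=> x y; rewrite !in_setI /U !inE => /andP[hx _] /andP[hy _] dxy.
    apply: val_inj; exact: Uanti.
have imA : (@phi n) @: A = U.
  apply/setP => u; apply/idP/idP.
  - move=> /imsetP[x xA ->]; exact: phiU (Apos x xA).
  - move=> uU; case: (boolP (u \in LL)) => uL.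
    + case/bigcupP: uL => t tT uL.
      have : u \in (@phi n) @: At t by rewrite imAt // in_setI uU.
      case/imsetP => x xt ->; apply: imset_f; rewrite in_setU; apply/orP; left.
      apply/bigcupP; by exists t.
    + have uA : u \in A by rewrite in_setU in_setD uL uU orbT.
      have -> : u = phi u.
        apply: val_inj => /=; rewrite phiv_id //.
          by move: uU; rewrite /U inE.
        rewrite -ltnS; exact: ltn_ord.
      exact: imset_f.
exists A; split.
- by split.
- by rewrite -(card_in_imset (phi_inj A Aanti)) imA cardU.
- exact: subsetUl.
- exact: Arange.
- apply/setP => x; rewrite in_setI; apply/idP/idP.
  + case/andP; rewrite in_setU in_setD => /orP[//|/andP[xnL _]] xL.
    by rewrite xL in xnL.
  + move=> xs; rewrite in_setU xs /=; case/bigcupP: xs => t tT xt.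
    apply/bigcupP; exists t => //; exact: subsetP (AtL t tT) x xt.
Qed.
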